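(* Let $\Omega\subset\mathbb{R}^d$ be nonempty, convex and compact with diameter $D$, and let $F(x)=\frac1n\sum_{i=1}^n f_i(x)$ where each $f_i$ is differentiable and $L$-smooth. Let $x^*\in\arg\min_{x\in\Omega}F(x)$, $x_0\in\Omega$, $\beta>0$ with $\beta\ge\frac{2(F(x_0)-F(x^* ))}{LD^2}$, let $m\ge1$ be an integer and $T$ a positive multiple of $m$. Run SVFW (defined in the context) with epoch size $m$, $S=T/m$ epochs, constant step size $\gamma_t=\gamma=\sqrt{\frac{F(x_0)-F(x^* )}{TLD^2\beta}}$ and minibatch size $b_t=b=m^2$ for all $t\in\{0,\dots,m-1\}$. Then the output $x_a$ satisfies $$\mathbb{E}[\mathcal{G}(x_a)]\le\frac{2D}{\sqrt{T\beta}}\sqrt{L(F(x_0)-F(x^* ))}\,(1+\beta).$$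
   Context: $f_i$ is $L$-smooth means $\|\nabla f_i(x)-\nabla f_i(y)\|\le L\|x-y\|$ for all $x,y\in\Omega$; diameter $D$ means $\|x-y\|\le D$ for all $x,y\in\Omega$. Frank–Wolfe gap: $\mathcal{G}(x)=\max_{v\in\Omega}\langle v-x,-\nabla F(x)\rangle$. Algorithm SVFW (input $x_0$, epoch size $m$, number of epochs $S$, step sizes $\gamma_t\in[0,1]$, minibatch sizes $b_t$, $t=0,\dots,m-1$): set $x^0_m=x_0$. For $s=0,\dots,S-1$: let $\tilde x^s=x^s_m$, compute $\tilde g^s=\nabla F(\tilde x^s)$, set $x^{s+1}_0=\tilde x^s$; for $t=0,\dots,m-1$: draw a multiset $I_t$ of $b_t$ indices uniformly at random with replacement from $\{1,\dots,n\}$ (independently of the past), set $\tilde\nabla_t=\frac{1}{b_t}\sum_{i\in I_t}\big(\nabla f_i(x^{s+1}_t)-\nabla f_i(\tilde x^s)\big)+\tilde g^s$, compute $v^{s+1}_t\in\arg\max_{v\in\Omega}\langle v,-\tilde\nabla_t\rangle$ and set $x^{s+1}_{t+1}=x^{s+1}_t+\gamma_t(v^{s+1}_t-x^{s+1}_t)$. The output $x_a$ is chosen uniformly at random from $\{x^{s+1}_t: 0\le t\le m-1,\ 0\le s\le S-1\}$. *)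

(* Defs.v *)
From Stdlib Require Import Reals ClassicalEpsilon.
From mathcomp Require Import all_boot.
Set Implicit Arguments. Unset Strict Implicit. Unset Printing Implicit Defensive.

Local Open Scope R_scope.

Definition vec (d : nat) := 'I_d -> R.
Definition vadd d (x y : vec d) : vec d := fun i => x i + y i.
Definition vsub d (x y : vec d) : vec d := fun i => x i - y i.
Definition vopp d (x : vec d) : vec d := fun i => - x i.
Definition vscale d (a : R) (x : vec d) : vec d := fun i => a * x i.
Definition dot d (x y : vec d) : R := \big[Rplus/0]_(i < d) (x i * y i).
Definition vnorm d (x : vec d) : R := sqrt (dot x x).

Definition convex_set d (Om : vec d -> Prop) : Prop :=
  forall x y l, Om x -> Om y -> 0 <= l <= 1 -> Om (vadd x (vscale l (vsub y x))).
Definition closed_set d (Om : vec d -> Prop) : Prop :=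
  forall x, (forall eps, 0 < eps -> exists y, Om y /\ vnorm (vsub x y) < eps) -> Om x.
Definition bounded_set d (Om : vec d -> Prop) : Prop :=
  exists M, forall x, Om x -> vnorm x <= M.
(* compactness in R^d (Heine--Borel) *)
Definition compact_set d (Om : vec d -> Prop) : Prop :=
  closed_set Om /\ bounded_set Om.
Definition nonempty_set d (Om : vec d -> Prop) : Prop := exists x, Om x.
Definition has_diameter d (Om : vec d -> Prop) (D : R) : Prop :=
  forall x y, Om x -> Om y -> vnorm (vsub x y) <= D.

Definition has_gradient d (f : vec d -> R) (g : vec d -> vec d) : Prop :=
  forall x eps, 0 < eps -> exists delta, 0 < delta /\
    forall y, vnorm (vsub y x) < delta ->
      Rabs (f y - f x - dot (g x) (vsub y x)) <= eps * vnorm (vsub y x).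

Definition L_smooth d (Om : vec d -> Prop) (g : vec d -> vec d) (L : R) : Prop :=
  forall x y, Om x -> Om y -> vnorm (vsub (g x) (g y)) <= L * vnorm (vsub x y).

Definition Favg d n (f : 'I_n -> vec d -> R) (x : vec d) : R :=
  / INR n * \big[Rplus/0]_(i < n) f i x.
Definition gradF d n (grad : 'I_n -> vec d -> vec d) (x : vec d) : vec d :=
  fun j => / INR n * \big[Rplus/0]_(i < n) grad i x j.

Definition FW_gap d (Om : vec d -> Prop) (gF : vec d -> vec d) (x : vec d) : R :=
  epsilon (inhabits 0)
    (fun r => is_lub (fun z => exists v, Om v /\ z = dot (vsub v x) (vopp (gF x))) r).

Definition is_lmo d (Om : vec d -> Prop) (lmo : vec d -> vec d) : Prop :=
  forall g, Om (lmo g) /\ forall v, Om v -> dot v (vopp g) <= dot (lmo g) (vopp g).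

(* Inner loop of one epoch: xtil is the snapshot, gtil = grad F(xtil),
   I t is the multiset (list) of sampled indices at inner step t (b_t = size (I t)).
   inner_iter ... t = x^{s+1}_t. *)
Fixpoint inner_iter d n (grad : 'I_n -> vec d -> vec d) (lmo : vec d -> vec d)
    (gamma : nat -> R) (xtil gtil : vec d) (I : nat -> seq 'I_n) (t : nat) : vec d :=
  match t with
  | O => xtil
  | S t' =>
      let x := inner_iter grad lmo gamma xtil gtil I t' in
      let est : vec d := fun j =>
        / INR (size (I t')) * \big[Rplus/0]_(i <- I t') (grad i x j - grad i xtil j)
        + gtil j in
      vadd x (vscale (gamma t') (vsub (lmo est) x))
  end.

(* snapshots: snapshot 0 = x0 (= x^0_m), snapshot (s+1) = x^{s+1}_m;
   w s t is the sample drawn at inner step t of epoch s *)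
Fixpoint snapshot d n (grad : 'I_n -> vec d -> vec d) (lmo : vec d -> vec d)
    (gamma : nat -> R) (m : nat) (x0 : vec d) (w : nat -> nat -> seq 'I_n) (s : nat)
    : vec d :=
  match s with
  | O => x0
  | S s' =>
      let xt := snapshot grad lmo gamma m x0 w s' in
      inner_iter grad lmo gamma xt (gradF grad xt) (w s') m
  end.

Definition svfw_iter d n (grad : 'I_n -> vec d -> vec d) (lmo : vec d -> vec d)
    (gamma : nat -> R) (m : nat) (x0 : vec d) (w : nat -> nat -> seq 'I_n)
    (s t : nat) : vec d :=
  let xt := snapshot grad lmo gamma m x0 w s in
  inner_iter grad lmo gamma xt (gradF grad xt) (w s) t.

(* Sample space of all draws: for each epoch s < S and inner step t < m,
   a b-tuple of indices drawn uniformly with replacement (independently). *)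
Definition samples (S m b n : nat) : finType := {ffun 'I_S * 'I_m -> b.-tuple 'I_n}.

Definition sample_path (S m b n : nat) (w : samples S m b n) : nat -> nat -> seq 'I_n :=
  fun s t =>
    match (insub s : option 'I_S), (insub t : option 'I_m) with
    | Some s', Some t' => tval (w (s', t'))
    | _, _ => [::]
    end.

(* E[ G(x_a) ]: expectation over the uniform sample space and over the uniformly
   chosen output index (s, t) in {0..S-1} x {0..m-1}. *)
Definition expected_gap d n (Om : vec d -> Prop) (grad : 'I_n -> vec d -> vec d)
    (lmo : vec d -> vec d) (gamma : nat -> R) (m S b : nat) (x0 : vec d) : R :=
  / INR #|samples S m b n| *
  \big[Rplus/0]_(w : samples S m b n)
     (/ INR (m * S) *
      \big[Rplus/0]_(s < S) \big[Rplus/0]_(t < m)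
         FW_gap Om (gradF grad)
           (svfw_iter grad lmo gamma m x0 (sample_path w) s t)).

(* Main.v *)
Require Import Defs.
From Stdlib Require Import Reals Lra ClassicalEpsilon FunctionalExtensionality.
From HB Require Import structures.
From mathcomp Require Import all_boot.
Set Implicit Arguments. Unset Strict Implicit. Unset Printing Implicit Defensive.
Local Open Scope R_scope.

Lemma Rplus_0_l' : left_id 0 Rplus. Proof. move=> x; lra. Qed.
Lemma Rplus_A : associative Rplus. Proof. move=> x y z; lra. Qed.
Lemma Rplus_C : commutative Rplus. Proof. move=> x y; lra. Qed.
HB.instance Definition _ := Monoid.isComLaw.Build R 0 Rplus Rplus_A Rplus_C Rplus_0_l'.


Lemma sumR_mull (I : Type) (r : seq I) (P : pred I) (F : I -> R) a :
  a * (\big[Rplus/0]_(i <- r | P i) F i) = \big[Rplus/0]_(i <- r | P i) (a * F i).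
Proof. apply: (big_endo (fun x => a * x)) => [x y|]; lra. Qed.

Lemma sumR_le (I : Type) (r : seq I) (P : pred I) (F G : I -> R) :
  (forall i, P i -> F i <= G i) ->
  \big[Rplus/0]_(i <- r | P i) F i <= \big[Rplus/0]_(i <- r | P i) G i.
Proof. move=> H; apply: (big_ind2 (fun x y => x <= y)) => //. lra. move=> *; lra. Qed.

Lemma sumR_ge0 (I : Type) (r : seq I) (P : pred I) (F : I -> R) :
  (forall i, P i -> 0 <= F i) -> 0 <= \big[Rplus/0]_(i <- r | P i) F i.
Proof. move=> H; apply: (big_ind (fun x => 0 <= x)) => //. lra. move=> *; lra. Qed.

Lemma sumR_opp (I : Type) (r : seq I) (P : pred I) (F : I -> R) :
  - (\big[Rplus/0]_(i <- r | P i) F i) = \big[Rplus/0]_(i <- r | P i) (- F i).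
Proof. apply: (big_endo (fun x => - x)) => [x y|]; lra. Qed.

Lemma sumR_sub (I : Type) (r : seq I) (P : pred I) (F G : I -> R) :
  \big[Rplus/0]_(i <- r | P i) (F i - G i) =
  \big[Rplus/0]_(i <- r | P i) F i - \big[Rplus/0]_(i <- r | P i) G i.
Proof. rewrite /Rminus big_split /= sumR_opp //. Qed.

Lemma sumR_const (I : finType) (c : R) :
  \big[Rplus/0]_(i : I) c = INR #|I| * c.
Proof. rewrite big_const; elim: #|I| => [|k IH]; first by rewrite /=; lra.
rewrite iterS IH S_INR; lra. Qed.

Lemma sumR_const_seq (I : Type) (r : seq I) (c : R) :
  \big[Rplus/0]_(i <- r) c = INR (size r) * c.
Proof. elim: r => [|x r IH]; first by rewrite big_nil /=; lra.
rewrite big_cons IH (_ : size (x :: r) = (size r).+1) // S_INR. lra. Qed.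

Lemma telescopeR (a : nat -> R) k :
  \big[Rplus/0]_(i < k) (a i - a i.+1) = a 0%N - a k.
Proof. elim: k => [|k IH]. rewrite big_ord0. lra.
rewrite big_ord_recr /=. rewrite IH. lra. Qed.

Section Vec.
Variable d : nat.
Implicit Types x y z : vec d.

Lemma dot_comm x y : dot x y = dot y x.
Proof. rewrite /dot; apply: eq_bigr => i _; lra. Qed.
Lemma dot_vsub_l x y z : dot (vsub x y) z = dot x z - dot y z.
Proof. rewrite /dot -sumR_sub; apply: eq_bigr => i _; rewrite /vsub; lra. Qed.
Lemma dot_vsub_r x y z : dot z (vsub x y) = dot z x - dot z y.
Proof. rewrite /dot -sumR_sub; apply: eq_bigr => i _; rewrite /vsub; lra. Qed.
Lemma dot_vadd_l x y z : dot (vadd x y) z = dot x z + dot y z.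
Proof. rewrite /dot -big_split; apply: eq_bigr => i _; rewrite /vadd /=; lra. Qed.
Lemma dot_vadd_r x y z : dot z (vadd x y) = dot z x + dot z y.
Proof. rewrite /dot -big_split; apply: eq_bigr => i _; rewrite /vadd /=; lra. Qed.
Lemma dot_vscale_l a x y : dot (vscale a x) y = a * dot x y.
Proof. rewrite /dot sumR_mull; apply: eq_bigr => i _; rewrite /vscale; lra. Qed.
Lemma dot_vscale_r a x y : dot y (vscale a x) = a * dot y x.
Proof. rewrite /dot sumR_mull; apply: eq_bigr => i _; rewrite /vscale; lra. Qed.
Lemma dot_vopp_l x y : dot (vopp x) y = - dot x y.
Proof. rewrite /dot sumR_opp; apply: eq_bigr => i _; rewrite /vopp; lra. Qed.
Lemma dot_vopp_r x y : dot y (vopp x) = - dot y x.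
Proof. rewrite /dot sumR_opp; apply: eq_bigr => i _; rewrite /vopp; lra. Qed.
Lemma dot_ge0 x : 0 <= dot x x.
Proof. apply: sumR_ge0 => i _; nra. Qed.
Lemma vnorm_ge0 x : 0 <= vnorm x.
Proof. exact: sqrt_pos. Qed.
Lemma vnorm_sq x : vnorm x * vnorm x = dot x x.
Proof. rewrite /vnorm sqrt_sqrt //; exact: dot_ge0. Qed.

Lemma dot_comb a b x y :
  dot (vsub (vscale a x) (vscale b y)) (vsub (vscale a x) (vscale b y)) =
  a * a * dot x x - 2 * a * b * dot x y + b * b * dot y y.
Proof.
rewrite !dot_vsub_l !dot_vsub_r !dot_vscale_l !dot_vscale_r (dot_comm y x); ring.
Qed.

Lemma CS0 x y : vnorm x = 0 -> dot x y <= 0.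
Proof.
move=> hx; have hxx : dot x x = 0 by rewrite -vnorm_sq hx; ring.
case: (Rle_lt_dec (dot x y) 0) => // hp.
have hY := dot_ge0 y.
set Y := dot y y in hY *.
set t := dot x y / (Y + 1).
have := dot_ge0 (vsub (vscale 1 x) (vscale t y)).
rewrite dot_comb hxx -/Y => h.
have ht : t * (Y + 1) = dot x y by rewrite /t; field; lra.
have ht0 : 0 < t by apply: Rdiv_lt_0_compat; lra.
have h1 : t * (2 * dot x y - t * Y) <= 0 by nra.
have h2 : 2 * dot x y - t * Y <= 0.
  case: (Rle_lt_dec (2 * dot x y - t * Y) 0) => // hc.
  have : 0 < t * (2 * dot x y - t * Y) by apply: Rmult_lt_0_compat.
  lra.
have : 0 <= t * Y by apply: Rmult_le_pos; lra.
lra.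
Qed.

Lemma CS x y : dot x y <= vnorm x * vnorm y.
Proof.
have hX := vnorm_ge0 x; have hY := vnorm_ge0 y.
case: (Req_dec (vnorm x) 0) => [h0|hX0].
  rewrite h0; have := CS0 y h0; lra.
case: (Req_dec (vnorm y) 0) => [h0|hY0].
  rewrite h0 dot_comm; have := CS0 x h0; lra.
have := dot_ge0 (vsub (vscale (vnorm y) x) (vscale (vnorm x) y)).
rewrite dot_comb -!vnorm_sq => h.
have hXY : 0 < vnorm x * vnorm y by apply: Rmult_lt_0_compat; lra.
nra.
Qed.

Lemma vnorm_triangle x y : vnorm (vadd x y) <= vnorm x + vnorm y.
Proof.
have hX := vnorm_ge0 x; have hY := vnorm_ge0 y; have hS := vnorm_ge0 (vadd x y).
have h : vnorm (vadd x y) * vnorm (vadd x y) <= (vnorm x + vnorm y) * (vnorm x + vnorm y).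
  rewrite vnorm_sq dot_vadd_l !dot_vadd_r (dot_comm y x) -!vnorm_sq.
  have := CS x y; nra.
nra.
Qed.

Lemma vnorm_scale a x : vnorm (vscale a x) = Rabs a * vnorm x.
Proof.
rewrite /vnorm dot_vscale_l dot_vscale_r -Rmult_assoc sqrt_mult.
- by rewrite (_ : a * a = Rsqr a) // sqrt_Rsqr_abs.
- nra.
- exact: dot_ge0.
Qed.

End Vec.

Lemma FW_gap_eq d (Om : vec d -> Prop) (lmo : vec d -> vec d) gF x :
  is_lmo Om lmo -> FW_gap Om gF x = dot (vsub (lmo (gF x)) x) (vopp (gF x)).
Proof.
move=> hl.
set E := fun z => exists v, Om v /\ z = dot (vsub v x) (vopp (gF x)).
set M := dot (vsub (lmo (gF x)) x) (vopp (gF x)).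
have hM : is_lub E M.
  split.
  - move=> z [v [hv ->]]; rewrite /M !dot_vsub_l.
    have := (hl (gF x)).2 v hv; lra.
  - move=> b hb; apply: hb; exists (lmo (gF x)); split => //; exact: (hl (gF x)).1.
rewrite /FW_gap.
have := epsilon_spec (inhabits 0) (fun r => is_lub E r) (ex_intro _ M hM).
move=> h; exact: is_lub_u h hM.
Qed.

Lemma vec_ext d (x y : vec d) : (forall i, x i = y i) -> x = y.
Proof. move=> h; exact: functional_extensionality h. Qed.

Lemma deriv_line d (f : vec d -> R) g x h c :
  has_gradient f g ->
  derivable_pt_lim (fun r => f (vadd x (vscale r h))) c
     (dot (g (vadd x (vscale c h))) h).
Proof.
move=> Hg eps heps.
set z := vadd x (vscale c h).
set N := vnorm h.
have hN : 0 <= N := vnorm_ge0 h.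
have he' : 0 < eps / (2 * (N + 1)) by apply: Rdiv_lt_0_compat; lra.
have [del [hdel H]] := Hg z _ he'.
have hd' : 0 < del / (N + 1) by apply: Rdiv_lt_0_compat; lra.
exists (mkposreal _ hd') => r hr0 hr; simpl in hr.
have ey : vsub (vadd x (vscale (c + r) h)) z = vscale r h.
  apply: vec_ext => i; rewrite /vsub /vadd /vscale /z /vadd /vscale; change (x i + (c + r) * h i - (x i + c * h i) = r * h i :> R); ring.
have hr1 : 0 < Rabs r by apply: Rabs_pos_lt.
have hnr : vnorm (vsub (vadd x (vscale (c + r) h)) z) < del.
  rewrite ey vnorm_scale -/N.
  have : Rabs r * (N + 1) < del.
    have := Rmult_lt_compat_r (N + 1) _ _ ltac:(lra) hr.
    rewrite /Rdiv Rmult_assoc Rinv_l; lra.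
  nra.
have HH := H _ hnr.
rewrite ey vnorm_scale -/N dot_vscale_r in HH.
set A := f (vadd x (vscale (c + r) h)) - f z - r * dot (g z) h in HH.
have eq : (f (vadd x (vscale (c + r) h)) - f z) / r - dot (g z) h = A / r.
  rewrite /A; field; exact: hr0.
rewrite eq /Rdiv Rabs_mult Rabs_inv.
apply: (Rmult_lt_reg_r (Rabs r)) => //.
rewrite Rmult_assoc Rinv_l; last lra.
have : eps / (2 * (N + 1)) * (Rabs r * N) < eps * Rabs r.
  have h1 : N / (2 * (N + 1)) < 1.
    apply (Rmult_lt_reg_r (2*(N+1))); first lra.
    rewrite /Rdiv Rmult_assoc Rinv_l; lra.
  have -> : eps / (2 * (N + 1)) * (Rabs r * N) = (eps * Rabs r) * (N / (2 * (N + 1))) by field; lra.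
  have : 0 < eps * Rabs r by nra.
  nra.
lra.
Qed.

Lemma descent d (Om : vec d -> Prop) (f : vec d -> R) g L x v s :
  convex_set Om -> has_gradient f g -> L_smooth Om g L -> 0 <= L ->
  Om x -> Om v -> 0 <= s <= 1 ->
  f (vadd x (vscale s (vsub v x))) <=
  f x + s * dot (g x) (vsub v x) + L * (s * s) * dot (vsub v x) (vsub v x).
Proof.
move=> hc Hg Hs hL hx hv hs.
set h := vsub v x.
have p0 : vadd x (vscale 0 h) = x.
  apply: vec_ext => i; rewrite /vadd /vscale; change (x i + 0 * h i = x i); ring.
have hhh := dot_ge0 h.
case: (Req_dec s 0) => [->|hs0].
  rewrite p0; nra.
have hs' : 0 < s by lra.
have [c [Hc Hcr]] := MVT_cor2 (fun r => f (vadd x (vscale r h)))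
   (fun r => dot (g (vadd x (vscale r h))) h) 0 s hs' (fun c _ => deriv_line x h c Hg).
simpl in Hc; rewrite p0 in Hc.
have hpc : Om (vadd x (vscale c h)) by apply: hc => //; lra.
have hsm := Hs _ _ hpc hx.
have ev : vsub (vadd x (vscale c h)) x = vscale c h.
  apply: vec_ext => i; rewrite /vsub /vadd /vscale; change (x i + c * h i - x i = c * h i); ring.
rewrite ev vnorm_scale Rabs_right in hsm; last lra.
have hcs := CS (vsub (g (vadd x (vscale c h))) (g x)) h.
rewrite dot_vsub_l in hcs.
have hN := vnorm_ge0 h.
have hNN := vnorm_sq h.
set D1 := dot (g (vadd x (vscale c h))) h in Hc hcs *.
set N1 := vnorm (vsub (g (vadd x (vscale c h))) (g x)) in hsm hcs.
have h1 : D1 <= dot (g x) h + L * c * dot h h.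
  have : N1 * vnorm h <= L * c * vnorm h * vnorm h by nra.
  rewrite Rmult_assoc hNN; lra.
have h2 : L * c * dot h h <= L * s * dot h h.
  apply: Rmult_le_compat_r => //; apply: Rmult_le_compat_l => //; lra.
nra.
Qed.

Lemma sum_dot_l d n (gi : 'I_n -> vec d) h :
  \big[Rplus/0]_(i < n) dot (gi i) h = dot (fun j => \big[Rplus/0]_(i < n) gi i j) h.
Proof.
rewrite /dot exchange_big /=; apply: eq_bigr => j _.
rewrite Rmult_comm sumR_mull; apply: eq_bigr => i _; ring.
Qed.

Lemma dot_gradF d n (grad : 'I_n -> vec d -> vec d) x h :
  dot (gradF grad x) h = / INR n * \big[Rplus/0]_(i < n) dot (grad i x) h.
Proof.
rewrite sum_dot_l /gradF /dot sumR_mull; apply: eq_bigr => j _; ring.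
Qed.

Lemma descentF d n (Om : vec d -> Prop) (f : 'I_n -> vec d -> R) grad L x v s :
  (0 < n)%N ->
  convex_set Om -> (forall i, has_gradient (f i) (grad i)) ->
  (forall i, L_smooth Om (grad i) L) -> 0 <= L ->
  Om x -> Om v -> 0 <= s <= 1 ->
  Favg f (vadd x (vscale s (vsub v x))) <=
  Favg f x + s * dot (gradF grad x) (vsub v x) + L * (s * s) * dot (vsub v x) (vsub v x).
Proof.
move=> hn hc Hg Hs hL hx hv hs.
have hn' : 0 < INR n by apply: lt_0_INR; apply/ltP.
rewrite /Favg dot_gradF.
set C := L * (s * s) * dot (vsub v x) (vsub v x).
have -> : C = / INR n * \big[Rplus/0]_(i < n) C.
  rewrite sumR_const card_ord; field; lra.
have key : \big[Rplus/0]_(i < n) f i (vadd x (vscale s (vsub v x))) <=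
   \big[Rplus/0]_(i < n) f i x + s * \big[Rplus/0]_(i < n) dot (grad i x) (vsub v x)
   + \big[Rplus/0]_(i < n) C.
  rewrite sumR_mull -!big_split /=.
  apply: sumR_le => i _.
  have := descent hc (Hg i) (Hs i) hL hx hv hs; rewrite /C; lra.
have hi : 0 < / INR n by apply: Rinv_0_lt_compat.
have := Rmult_le_compat_l _ _ _ (Rlt_le _ _ hi) key.
lra.
Qed.

Section Iter.
Variables (d n : nat) (grad : 'I_n -> vec d -> vec d) (lmo : vec d -> vec d).
Variable gam : R.
Notation gf := (fun _ : nat => gam).

Lemma inner_iter_ext xtil gtil (I1 I2 : nat -> seq 'I_n) t :
  (forall t', (t' < t)%N -> I1 t' = I2 t') ->
  inner_iter grad lmo gf xtil gtil I1 t = inner_iter grad lmo gf xtil gtil I2 t.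
Proof.
elim: t => [|t IH] h //=.
rewrite IH; last by move=> t' ht'; apply: h; apply: ltn_trans ht' _.
by rewrite h.
Qed.

Lemma snapshot_ext m x0 (P1 P2 : nat -> nat -> seq 'I_n) s :
  (forall s' t', (s' < s)%N -> P1 s' t' = P2 s' t') ->
  snapshot grad lmo gf m x0 P1 s = snapshot grad lmo gf m x0 P2 s.
Proof.
elim: s => [|s IH] h //=.
rewrite IH; last by move=> s' t' hs'; apply: h; apply: ltn_trans hs' _.
apply: inner_iter_ext => t' _; exact: h.
Qed.

Variables (Om : vec d -> Prop) (D : R).
Hypothesis hconv : convex_set Om.
Hypothesis hdiam : has_diameter Om D.
Hypothesis hlmo : is_lmo Om lmo.
Hypothesis hgam : 0 <= gam <= 1.
Hypothesis hD : 0 <= D.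

Lemma inner_props xtil gtil I t : Om xtil ->
  Om (inner_iter grad lmo gf xtil gtil I t) /\
  vnorm (vsub (inner_iter grad lmo gf xtil gtil I t) xtil) <= INR t * gam * D.
Proof.
move=> hx; elim: t => [|t [IH1 IH2]]; last rewrite S_INR /=.
  split => //=.
  have -> : vsub xtil xtil = vscale 0 xtil.
    apply: vec_ext => i; rewrite /vsub /vscale; change (xtil i - xtil i = 0 * xtil i); ring.
  rewrite vnorm_scale Rabs_R0; lra.
move: IH1 IH2.
set x := inner_iter _ _ _ _ _ _ t.
set v := lmo _.
move=> IH1 IH2.
have hv : Om v by exact: (hlmo _).1.
split; first by apply: hconv.
have -> : vsub (vadd x (vscale gam (vsub v x))) xtil = vadd (vsub x xtil) (vscale gam (vsub v x)).
  apply: vec_ext => i; rewrite /vsub /vadd /vscale.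
  change (x i + gam * (v i - x i) - xtil i = x i - xtil i + gam * (v i - x i)); ring.
apply: Rle_trans (vnorm_triangle _ _) _.
rewrite vnorm_scale Rabs_right; last lra.
have := hdiam hv IH1.
have : 0 <= gam * D by nra.
nra.
Qed.

Lemma snapshot_in m x0 (P : nat -> nat -> seq 'I_n) s : Om x0 ->
  Om (snapshot grad lmo gf m x0 P s).
Proof.
move=> h0; elim: s => [|s IH] //=; exact: (inner_props _ _ _ IH).1.
Qed.

Variables (f : 'I_n -> vec d -> R) (L : R).
Hypothesis hn : (0 < n)%N.
Hypothesis Hg : forall i, has_gradient (f i) (grad i).
Hypothesis Hs : forall i, L_smooth Om (grad i) L.
Hypothesis hL : 0 <= L.

Lemma step_ineq xtil gtil I t : Om xtil ->
  let x := inner_iter grad lmo gf xtil gtil I t in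
  let est : vec d := fun j =>
    / INR (size (I t)) * \big[Rplus/0]_(i <- I t) (grad i x j - grad i xtil j) + gtil j in
  gam * FW_gap Om (gradF grad) x <=
  Favg f x - Favg f (inner_iter grad lmo gf xtil gtil I t.+1)
  + L * (gam * gam) * (D * D) + gam * D * vnorm (vsub est (gradF grad x)).
Proof.
move=> hx x est.
have hxO : Om x := (inner_props gtil I t hx).1.
change (inner_iter grad lmo gf xtil gtil I t.+1) with (vadd x (vscale gam (vsub (lmo est) x))).
set v := lmo est.
set u := lmo (gradF grad x).
set gF := gradF grad x.
have hv : Om v by exact: (hlmo _).1.
have hu : Om u by exact: (hlmo _).1.
have hdesc := descentF hn hconv Hg Hs hL hxO hv hgam.
rewrite (FW_gap_eq _ _ hlmo) -/gF -/u.
have hvx : dot (vsub v x) (vsub v x) <= D * D.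
  rewrite -vnorm_sq; have := hdiam hv hxO; have := vnorm_ge0 (vsub v x); nra.
have hl1 := (hlmo est).2 u hu; rewrite -/v in hl1.
have hcs := CS (vsub u v) (vsub est gF).
have hduv := hdiam hu hv.
have hne := vnorm_ge0 (vsub est gF).
have hcs2 : dot (vsub u v) (vsub est gF) <= D * vnorm (vsub est gF).
  apply: Rle_trans hcs _; apply: Rmult_le_compat_r => //.
move: hl1 hcs2 hdesc.
rewrite ?dot_vsub_l ?dot_vsub_r ?dot_vopp_r ?dot_vsub_l.
rewrite (dot_comm gF v) (dot_comm gF x).
move=> hl1 hcs2 hdesc.
have key : dot v gF - dot x gF <= - (- dot u gF - - dot x gF) + D * vnorm (vsub est gF) by lra.
have hgam0 : 0 <= gam by lra.
have := Rmult_le_compat_l _ _ _ hgam0 key.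
have : L * (gam * gam) * (dot v v - dot v x - (dot x v - dot x x)) <= L * (gam * gam) * (D * D).
  apply: Rmult_le_compat_l; first nra.
  move: hvx; rewrite !dot_vsub_l !dot_vsub_r; lra.
nra.
Qed.

End Iter.

Lemma sum_tuple_cons (T : finType) b (F : (b.+1).-tuple T -> R) :
  \big[Rplus/0]_(k : (b.+1).-tuple T) F k =
  \big[Rplus/0]_(i : T) \big[Rplus/0]_(k : b.-tuple T) F [tuple of i :: k].
Proof.
rewrite pair_big /=.
rewrite (reindex (fun p : T * b.-tuple T => [tuple of p.1 :: p.2])) /=; first by [].
exists (fun k : (b.+1).-tuple T => (thead k, [tuple of behead k])).
- move=> [i k] _ /=; rewrite theadE; congr (_, _); exact: val_inj.
- move=> k _ /=; by rewrite -tuple_eta.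
Qed.

Lemma sum_tuple_M n (c : 'I_n -> R) b :
  \big[Rplus/0]_(i < n) c i = 0 ->
  \big[Rplus/0]_(k : b.-tuple 'I_n) \big[Rplus/0]_(i <- k) c i = 0.
Proof.
move=> hc; elim: b => [|b IH].
  apply: big1 => k _; have -> : tval k = [::] by apply: size0nil; rewrite size_tuple.
  by rewrite big_nil.
rewrite sum_tuple_cons.
under eq_bigr => i _ do under eq_bigr => k _ do rewrite (_ : tval [tuple of i :: k] = i :: tval k) // big_cons.
under eq_bigr => i _ do rewrite big_split /= IH sumR_const.
rewrite big_split /= -sumR_mull hc; ring_simplify.
rewrite sumR_const; ring.
Qed.

Lemma sq_expand (a b : R) : (a + b) * (a + b) = a * a + (2 * a * b + b * b).
Proof. ring. Qed.

Lemma card_tupleS n b : INR #|{: (b.+1).-tuple 'I_n}| = INR n * INR #|{: b.-tuple 'I_n}|.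
Proof. by rewrite !card_tuple card_ord expnS mult_INR. Qed.

Lemma sum_tuple_Q n (c : 'I_n -> R) b :
  \big[Rplus/0]_(i < n) c i = 0 ->
  \big[Rplus/0]_(k : b.-tuple 'I_n) ((\big[Rplus/0]_(i <- k) c i) * (\big[Rplus/0]_(i <- k) c i)) * INR n
  = INR b * INR #|{: b.-tuple 'I_n}| * \big[Rplus/0]_(i < n) (c i * c i).
Proof.
move=> hc; elim: b => [|b IH].
  rewrite big1 /=; first ring.
  move=> k _; have -> : tval k = [::] by apply: size0nil; rewrite size_tuple.
  rewrite big_nil; ring.
rewrite sum_tuple_cons card_tupleS S_INR.
under eq_bigr => i _ do under eq_bigr => k _ do rewrite (_ : tval [tuple of i :: k] = i :: tval k) // big_cons sq_expand.
under eq_bigr => i _ do rewrite big_split /= big_split /= sumR_const.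
under eq_bigr => i _ do rewrite -sumR_mull (sum_tuple_M b hc).
rewrite big_split /= big_split /= sumR_const card_ord.
rewrite (big1 _ _ (fun i => 2 * c i * 0)); last by move=> i _; ring.
have -> : \big[Rplus/0]_(i < n) (INR #|{: b.-tuple 'I_n}| * (c i * c i))
   = INR #|{: b.-tuple 'I_n}| * \big[Rplus/0]_(i < n) (c i * c i) by rewrite sumR_mull.
set Q := \big[Rplus/0]_(k : b.-tuple 'I_n) _ in IH *.
set K := INR #|{: b.-tuple 'I_n}| in IH *.
set C := \big[Rplus/0]_(i < n) (c i * c i) in IH *.
have -> : (K * C + (0 + INR n * Q)) * INR n = K * C * INR n + INR n * (Q * INR n) by ring.
rewrite IH; ring.
Qed.

Lemma var_bound n (a : 'I_n -> R) b : (0 < n)%N -> (0 < b)%N ->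
  \big[Rplus/0]_(k : b.-tuple 'I_n)
     ((/ INR b * \big[Rplus/0]_(i <- k) a i - / INR n * \big[Rplus/0]_(i < n) a i) *
      (/ INR b * \big[Rplus/0]_(i <- k) a i - / INR n * \big[Rplus/0]_(i < n) a i))
  <= INR #|{: b.-tuple 'I_n}| / (INR b * INR n) * \big[Rplus/0]_(i < n) (a i * a i).
Proof.
move=> hn hb.
have hn' : 0 < INR n by apply: lt_0_INR; apply/ltP.
have hb' : 0 < INR b by apply: lt_0_INR; apply/ltP.
set A := \big[Rplus/0]_(i < n) a i.
set ab := / INR n * A.
set c := fun i => a i - ab.
have hc : \big[Rplus/0]_(i < n) c i = 0.
  rewrite /c sumR_sub sumR_const card_ord /ab -/A; field; lra.
have E : forall k : b.-tuple 'I_n,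
   / INR b * \big[Rplus/0]_(i <- k) a i - ab = / INR b * \big[Rplus/0]_(i <- k) c i.
  move=> k; rewrite /c sumR_sub sumR_const_seq size_tuple; field; lra.
under eq_bigr => k _ do rewrite E.
have Q := sum_tuple_Q b hc.
set K := INR #|{: b.-tuple 'I_n}| in Q *.
set C := \big[Rplus/0]_(i < n) (c i * c i) in Q.
set SS := \big[Rplus/0]_(k : b.-tuple 'I_n) _ in Q.
have -> : \big[Rplus/0]_(k : b.-tuple 'I_n) (/ INR b * \big[Rplus/0]_(i <- k) c i * (/ INR b * \big[Rplus/0]_(i <- k) c i))
   = / INR b * / INR b * SS.
  rewrite /SS sumR_mull; apply: eq_bigr => k _; ring.
have hSS : SS = INR b * K * C / INR n by rewrite -Q; field; lra.
have hK : 0 <= K by apply: pos_INR.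
have hC : C <= \big[Rplus/0]_(i < n) (a i * a i).
  have -> : C = \big[Rplus/0]_(i < n) (a i * a i) - ab * A.
    rewrite /C /c.
    have -> : \big[Rplus/0]_(i < n) ((a i - ab) * (a i - ab))
       = \big[Rplus/0]_(i < n) (a i * a i) - ab * \big[Rplus/0]_(i < n) a i - ab * \big[Rplus/0]_(i < n) (a i - ab).
      rewrite !sumR_mull -!sumR_sub; apply: eq_bigr => i _; ring.
    have := hc; rewrite /c => ->; rewrite -/A; ring.
  have : 0 <= ab * A.
    rewrite /ab; have : 0 <= / INR n by left; apply: Rinv_0_lt_compat.
    nra.
  lra.
rewrite hSS.
have -> : / INR b * / INR b * (INR b * K * C / INR n) = K / (INR b * INR n) * C by field; lra.
apply: Rmult_le_compat_l => //.
rewrite /Rdiv; apply: Rmult_le_pos => //; left; apply: Rinv_0_lt_compat; nra.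
Qed.

Definition upd (A B : finType) (w : {ffun A -> B}) (a : A) (k : B) : {ffun A -> B} :=
  [ffun p => if p == a then k else w p].

Lemma ffun_swap (A B : finType) (a : A) (H : {ffun A -> B} -> B -> R) j k :
  (forall w k0 k', H (upd w a k') k0 = H w k0) ->
  \big[Rplus/0]_(w : {ffun A -> B} | w a == j) H w k = \big[Rplus/0]_(w : {ffun A -> B} | w a == k) H w k.
Proof.
move=> hH.
pose sw (y : B) := if y == j then k else if y == k then j else y.
have swK : involutive sw.
  move=> y; rewrite /sw; case: (eqVneq y j) => [->|hyj].
    by rewrite eqxx; case: (eqVneq k j).
  case: (eqVneq y k) => [->|hyk].
    by rewrite eqxx; case: (eqVneq k j) => [->|hkj]; rewrite ?eqxx.
  by rewrite (negbTE hyj) (negbTE hyk).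
pose tau (w : {ffun A -> B}) := upd w a (sw (w a)).
have tauK : involutive tau.
  move=> w; apply/ffunP => p; rewrite /tau /upd !ffunE.
  case: (eqVneq p a) => [->|hp] //; by rewrite eqxx swK.
rewrite [RHS](reindex_inj (can_inj tauK)) /=.
apply: eq_big => [w|w _].
- rewrite /tau /upd ffunE eqxx /sw.
  case: (eqVneq (w a) j) => [_|hj]; first by rewrite eqxx.
  case: (eqVneq (w a) k) => [hwk|hk]; last by rewrite (negbTE hk).
  by rewrite -hwk eq_sym (negbTE hj).
- by change (H w k = H (upd w a (sw (w a))) k); rewrite hH.
Qed.

Lemma ffun_indep (A B : finType) (a : A) (H : {ffun A -> B} -> B -> R) :
  (forall w k0 k', H (upd w a k') k0 = H w k0) ->
  INR #|B| * \big[Rplus/0]_(w : {ffun A -> B}) H w (w a) =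
  \big[Rplus/0]_(w : {ffun A -> B}) \big[Rplus/0]_(k : B) H w k.
Proof.
move=> hH.
rewrite exchange_big /=.
rewrite (partition_big (fun w : {ffun A -> B} => w a) xpredT) //= sumR_mull.
apply: eq_bigr => k _.
symmetry.
rewrite (partition_big (fun w : {ffun A -> B} => w a) xpredT) //=.
under eq_bigr => j _ do rewrite (ffun_swap j k hH).
rewrite sumR_const; congr (_ * _).
by apply: eq_bigr => w /eqP ->.
Qed.

Definition errsq d n (grad : 'I_n -> vec d -> vec d) (x xtil gtil : vec d) (It : seq 'I_n) : R :=
  let est : vec d := fun j =>
    / INR (size It) * \big[Rplus/0]_(i <- It) (grad i x j - grad i xtil j) + gtil j in
  dot (vsub est (gradF grad x)) (vsub est (gradF grad x)).

Lemma sample_path_ord S m b n (w : samples S m b n) (s : 'I_S) (t : 'I_m) :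
  sample_path w s t = tval (w (s, t)).
Proof.
rewrite /sample_path.
have -> : (insub (nat_of_ord s) : option 'I_S) = Some s by apply: (valK s).
have -> : (insub (nat_of_ord t) : option 'I_m) = Some t by apply: (valK t).
by [].
Qed.

Lemma sample_path_upd S m b n (w : samples S m b n) (s : 'I_S) (t : 'I_m) k (s' t' : nat) :
  (s' != nat_of_ord s \/ t' != nat_of_ord t) -> sample_path (upd w (s, t) k) s' t' = sample_path w s' t'.
Proof.
move=> hne; rewrite /sample_path.
case: insubP => [s1 _ es1|_] //; case: insubP => [t1 _ et1|_] //.
rewrite /upd ffunE; case: eqP => // -[e1 e2].
by subst; case: hne; rewrite eqxx.
Qed.

Section Err.
Variables (d n : nat) (grad : 'I_n -> vec d -> vec d) (lmo : vec d -> vec d).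
Variables (gam : R) (Om : vec d -> Prop) (D L : R) (x0 : vec d) (S m b : nat).
Hypothesis hconv : convex_set Om.
Hypothesis hdiam : has_diameter Om D.
Hypothesis hlmo : is_lmo Om lmo.
Hypothesis hgam : 0 <= gam <= 1.
Hypothesis hD : 0 <= D.
Hypothesis hn : (0 < n)%N.
Hypothesis Hs : forall i, L_smooth Om (grad i) L.
Hypothesis hL : 0 <= L.
Hypothesis hx0 : Om x0.
Hypothesis hb : (0 < b)%N.

Notation gf := (fun _ : nat => gam).
Notation Xt w s := (snapshot grad lmo gf m x0 (sample_path w) s).
Notation X w s t := (svfw_iter grad lmo gf m x0 (sample_path w) s t).

Lemma Xt_upd (w : samples S m b n) (s : 'I_S) (t : 'I_m) k :
  Xt (upd w (s, t) k) s = Xt w s.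
Proof.
apply: snapshot_ext => s' t' hs'; apply: sample_path_upd; left.
by rewrite neq_ltn hs'.
Qed.

Lemma X_upd (w : samples S m b n) (s : 'I_S) (t : 'I_m) k :
  X (upd w (s, t) k) s t = X w s t.
Proof.
rewrite /svfw_iter Xt_upd; apply: inner_iter_ext => t' ht'.
apply: sample_path_upd; right; by rewrite neq_ltn ht'.
Qed.

Lemma err_bound (s : 'I_S) (t : 'I_m) :
  \big[Rplus/0]_(w : samples S m b n)
     errsq grad (X w s t) (Xt w s) (gradF grad (Xt w s)) (sample_path w s t)
  <= INR #|samples S m b n| * (L * L * ((INR t * gam * D) * (INR t * gam * D)) / INR b).
Proof.
have hn' : 0 < INR n by apply: lt_0_INR; apply/ltP.
have hb' : 0 < INR b by apply: lt_0_INR; apply/ltP.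
pose a (w : samples S m b n) (i : 'I_n) (j : 'I_d) := grad i (X w s t) j - grad i (Xt w s) j.
pose H (w : samples S m b n) (k : b.-tuple 'I_n) :=
  \big[Rplus/0]_(j < d) ((/ INR b * \big[Rplus/0]_(i <- k) a w i j - / INR n * \big[Rplus/0]_(i < n) a w i j) *
                         (/ INR b * \big[Rplus/0]_(i <- k) a w i j - / INR n * \big[Rplus/0]_(i < n) a w i j)).
have E : forall w, errsq grad (X w s t) (Xt w s) (gradF grad (Xt w s)) (sample_path w s t) = H w (w (s, t)).
  move=> w; rewrite /errsq sample_path_ord size_tuple /H /dot; apply: eq_bigr => j _.
  have -> : vsub (fun j0 => / INR b * \big[Rplus/0]_(i <- w (s, t))
                  (grad i (X w s t) j0 - grad i (Xt w s) j0) + gradF grad (Xt w s) j0)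
                 (gradF grad (X w s t)) j
          = / INR b * \big[Rplus/0]_(i <- w (s, t)) a w i j - / INR n * \big[Rplus/0]_(i < n) a w i j :> R.
    rewrite /vsub /= /a /gradF !sumR_sub.
    have gen : forall p q r s0 u v : R, u * (p - q) + v * r - v * s0 = u * (p - q) - v * (s0 - r) by move=> *; ring.
    exact: gen.
  by [].
have inv : forall w k k', H (upd w (s, t) k') k = H w k.
  by move=> w k k'; rewrite /H /a X_upd Xt_upd.
set K := INR #|{: b.-tuple 'I_n}|.
have hK : 0 < K.
  rewrite /K card_tuple card_ord; apply: lt_0_INR; apply/ltP; by rewrite expn_gt0 hn.
set c := L * L * ((INR t * gam * D) * (INR t * gam * D)) / INR b.
have bnd : forall w, \big[Rplus/0]_(k : b.-tuple 'I_n) H w k <= K * c.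
  move=> w; rewrite /H exchange_big /=.
  have hXt : Om (Xt w s) by apply: (snapshot_in grad hconv hdiam hlmo hgam hD).
  have [hX hdist] := inner_props grad hconv hdiam hlmo hgam hD (gradF grad (Xt w s)) (sample_path w s) t hXt.
  apply: (Rle_trans _ (\big[Rplus/0]_(j < d) (K / (INR b * INR n) * \big[Rplus/0]_(i < n) (a w i j * a w i j)))).
    apply: sumR_le => j _; exact: (var_bound (fun i => a w i j) hn hb).
  rewrite -sumR_mull -/K exchange_big /=.
  set N := vnorm (vsub (svfw_iter grad lmo gf m x0 (sample_path w) s t) (Xt w s)) in hdist.
  have hi : forall i : 'I_n, \big[Rplus/0]_(j < d) (a w i j * a w i j) <= L * L * (N * N).
    move=> i.
    have h1 := Hs i hX hXt.
    have h0 := vnorm_ge0 (vsub (grad i (X w s t)) (grad i (Xt w s))).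
    have hN := vnorm_ge0 (vsub (X w s t) (Xt w s)).
    have : \big[Rplus/0]_(j < d) (a w i j * a w i j) =
           vnorm (vsub (grad i (X w s t)) (grad i (Xt w s))) * vnorm (vsub (grad i (X w s t)) (grad i (Xt w s))).
      by rewrite vnorm_sq.
    move=> ->; have := Rmult_le_compat _ _ _ _ h0 h0 h1 h1; rewrite -/N; lra.
  apply: (Rle_trans _ (K / (INR b * INR n) * \big[Rplus/0]_(i < n) (L * L * (N * N)))).
    apply: Rmult_le_compat_l; last by apply: sumR_le => i _; exact: hi.
    rewrite /Rdiv; apply: Rmult_le_pos; first lra.
    left; apply: Rinv_0_lt_compat; nra.
  rewrite sumR_const card_ord.
  have hN := vnorm_ge0 (vsub (X w s t) (Xt w s)); rewrite -/N in hN.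
  have hNN : N * N <= (INR t * gam * D) * (INR t * gam * D) by nra.
  rewrite /c.
  have -> : K / (INR b * INR n) * (INR n * (L * L * (N * N))) = K * (L * L * (N * N) / INR b) by field; lra.
  apply: Rmult_le_compat_l; first lra.
  rewrite /Rdiv; apply: Rmult_le_compat_r; first by left; apply: Rinv_0_lt_compat.
  apply: Rmult_le_compat_l => //; nra.
have main := ffun_indep inv.
rewrite card_tuple card_ord in main.
under eq_bigr => w _ do rewrite E.
apply: (Rmult_le_reg_l K) => //.
rewrite /K card_tuple card_ord main.
apply: (Rle_trans _ (\big[Rplus/0]_(w : samples S m b n) (K * c))).
  by apply: sumR_le => w _; exact: bnd w.
rewrite sumR_const /K card_tuple card_ord; lra.
Qed.

End Err.

Lemma step2 d n (grad : 'I_n -> vec d -> vec d) lmo gam (Om : vec d -> Prop) D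
  (f : 'I_n -> vec d -> R) L xtil gtil (I : nat -> seq 'I_n) t :
  convex_set Om -> has_diameter Om D -> is_lmo Om lmo -> 0 <= gam <= 1 -> 0 <= D ->
  (0 < n)%N -> (forall i, has_gradient (f i) (grad i)) ->
  (forall i, L_smooth Om (grad i) L) -> 0 < L -> Om xtil ->
  gam * FW_gap Om (gradF grad) (inner_iter grad lmo (fun _ => gam) xtil gtil I t) <=
  Favg f (inner_iter grad lmo (fun _ => gam) xtil gtil I t)
  - Favg f (inner_iter grad lmo (fun _ => gam) xtil gtil I t.+1)
  + 3 / 2 * L * (gam * gam) * (D * D)
  + / (2 * L) * errsq grad (inner_iter grad lmo (fun _ => gam) xtil gtil I t) xtil gtil (I t).
Proof.
move=> hc hdi hl hg hD hn Hg Hs hL hx.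
have h := step_ineq hc hdi hl hg hD hn Hg Hs (Rlt_le _ _ hL) gtil I t hx.
cbv zeta in h.
rewrite /errsq; cbv zeta.
move: h.
set V := vnorm _.
have hV : dot (vsub (fun j => / INR (size (I t)) *
    \big[Rplus/0]_(i <- I t) (grad i (inner_iter grad lmo (fun=> gam) xtil gtil I t) j - grad i xtil j) + gtil j)
    (gradF grad (inner_iter grad lmo (fun=> gam) xtil gtil I t)))
  (vsub (fun j => / INR (size (I t)) *
    \big[Rplus/0]_(i <- I t) (grad i (inner_iter grad lmo (fun=> gam) xtil gtil I t) j - grad i xtil j) + gtil j)
    (gradF grad (inner_iter grad lmo (fun=> gam) xtil gtil I t))) = V * V by rewrite vnorm_sq.
rewrite hV.
move=> h.
have amgm : gam * D * V <= L * (gam * gam) * (D * D) / 2 + / (2 * L) * (V * V).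
  have h2 : 0 <= (L * gam * D - V) * (L * gam * D - V) by apply: Rle_0_sqr.
  apply: (Rmult_le_reg_l (2 * L)); first lra.
  have -> : 2 * L * (L * (gam * gam) * (D * D) / 2 + / (2 * L) * (V * V))
     = L * L * (gam * gam) * (D * D) + V * V by field; lra.
  nra.
lra.
Qed.

Lemma sumR_nonpos (I : Type) (r : seq I) (P : pred I) (F : I -> R) :
  (forall i, P i -> F i <= 0) -> \big[Rplus/0]_(i <- r | P i) F i <= 0.
Proof.
move=> h; apply: Rle_trans (sumR_le r (fun i hi => h i hi)) _; rewrite big1 //; lra.
Qed.

Lemma gap_min d n (Om : vec d -> Prop) (f : 'I_n -> vec d -> R) grad L lmo x :
  (0 < n)%N -> convex_set Om -> (forall i, has_gradient (f i) (grad i)) ->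
  (forall i, L_smooth Om (grad i) L) -> 0 <= L -> is_lmo Om lmo -> Om x ->
  (forall y, Om y -> Favg f x <= Favg f y) ->
  FW_gap Om (gradF grad) x <= 0.
Proof.
move=> hn hc Hg Hs hL hl hx hmin.
rewrite (FW_gap_eq _ _ hl).
set u := lmo (gradF grad x).
have hu : Om u by exact: (hl _).1.
set G := dot (vsub u x) (vopp (gradF grad x)).
have hG : G = - dot (gradF grad x) (vsub u x) by rewrite /G dot_vopp_r dot_comm.
set q := dot (vsub u x) (vsub u x).
have hq : 0 <= q := dot_ge0 _.
case: (Rle_lt_dec G 0) => // hGp.
set s := G / (2 * L * q + G).
have hden : 0 < 2 * L * q + G by nra.
have hs0 : 0 < s by apply: Rdiv_lt_0_compat.
have hs1 : s <= 1.
  apply: (Rmult_le_reg_r (2 * L * q + G)) => //.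
  rewrite /s /Rdiv Rmult_assoc Rinv_l; nra.
have hd := descentF hn hc Hg Hs hL hx hu (conj (Rlt_le _ _ hs0) hs1).
have hp : Om (vadd x (vscale s (vsub u x))) by apply: hc => //; lra.
have hm := hmin _ hp.
rewrite -/q in hd.
have e1 : s * dot (gradF grad x) (vsub u x) = - (s * G) by rewrite hG; ring.
have h1 : s * G <= L * (s * s) * q by lra.
have h2 : G <= L * s * q.
  apply: (Rmult_le_reg_l s) => //; nra.
have h3 : L * s * q * (2 * L * q + G) = L * q * G.
  rewrite /s; field; lra.
nra.
Qed.

Lemma inner_iter0 d n (grad : 'I_n -> vec d -> vec d) lmo xtil gtil I t :
  inner_iter grad lmo (fun _ => 0) xtil gtil I t = xtil.
Proof.
elim: t => [|t IH] //=; rewrite IH.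
apply: vec_ext => i; rewrite /vadd /vscale.
change (xtil i + 0 * (vsub (lmo (fun j => / INR (size (I t)) *
   \big[Rplus/0]_(i0 <- I t) (grad i0 xtil j - grad i0 xtil j) + gtil j)) xtil i) = xtil i :> R).
ring.
Qed.

Lemma snapshot0 d n (grad : 'I_n -> vec d -> vec d) lmo m x0 P s :
  snapshot grad lmo (fun _ => 0) m x0 P s = x0.
Proof. elim: s => [|s IH] //=; by rewrite inner_iter0. Qed.

Lemma main_bound d n (f : 'I_n -> vec d -> R) (grad : 'I_n -> vec d -> vec d)
  (Om : vec d -> Prop) (D L : R) (xstar x0 : vec d) (m S : nat)
  (lmo : vec d -> vec d) (gam : R) :
  (0 < n)%N -> convex_set Om -> has_diameter Om D -> 0 <= D -> 0 < L ->
  (forall i, has_gradient (f i) (grad i)) ->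
  (forall i, L_smooth Om (grad i) L) ->
  (forall x, Om x -> Favg f xstar <= Favg f x) ->
  Om x0 -> (0 < m)%N -> (0 < S)%N -> is_lmo Om lmo -> 0 < gam <= 1 ->
  expected_gap Om grad lmo (fun _ => gam) m S (m ^ 2)%N x0 <=
  (Favg f x0 - Favg f xstar + 2 * INR (m * S) * (L * (gam * gam) * (D * D)))
  / (INR (m * S) * gam).
Proof.
move=> hn hconv hdiam hD hL Hg Hs hmin hx0 hm hS hlmo hgam.
have hgam' : 0 <= gam <= 1 by lra.
set b := (m ^ 2)%N.
have hb : (0 < b)%N by rewrite /b expn_gt0 hm.
set C := L * (gam * gam) * (D * D).
set Dl := Favg f x0 - Favg f xstar.
have hT : 0 < INR (m * S) by apply: lt_0_INR; apply/ltP; rewrite muln_gt0 hm hS.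
set T := INR (m * S) in hT *.
have hTe : T = INR S * INR m by rewrite /T mult_INR Rmult_comm.
set W := INR #|samples S m b n|.
have hW : 0 < W.
  rewrite /W card_ffun card_tuple card_ord; apply: lt_0_INR; apply/ltP.
  by rewrite !expn_gt0 hn.
pose X (w : samples S m b n) (s t : nat) := svfw_iter grad lmo (fun _ => gam) m x0 (sample_path w) s t.
pose Xt (w : samples S m b n) (s : nat) := snapshot grad lmo (fun _ => gam) m x0 (sample_path w) s.
pose E (w : samples S m b n) (s : 'I_S) (t : 'I_m) :=
  errsq grad (X w s t) (Xt w s) (gradF grad (Xt w s)) (sample_path w s t).
pose Gs (w : samples S m b n) := \big[Rplus/0]_(s < S) \big[Rplus/0]_(t < m) FW_gap Om (gradF grad) (X w s t).
have key : forall w, gam * Gs w <= Dl + T * (3 / 2 * C)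
    + / (2 * L) * \big[Rplus/0]_(s < S) \big[Rplus/0]_(t < m) E w s t.
  move=> w.
  have step : forall (s : 'I_S) (t : 'I_m), gam * FW_gap Om (gradF grad) (X w s t) <=
     (Favg f (X w s t) - Favg f (X w s t.+1)) + (3 / 2 * C + / (2 * L) * E w s t).
    move=> s t.
    have hXt : Om (Xt w s) by apply: (snapshot_in grad hconv hdiam hlmo hgam' hD).
    have := step2 (gradF grad (Xt w s)) (sample_path w s) t hconv hdiam hlmo hgam' hD hn Hg Hs hL hXt.
    move=> h; apply: Rle_trans h _; right; rewrite /C /E /X /Xt /svfw_iter; ring.
  rewrite /Gs sumR_mull.
  apply: (Rle_trans _ (\big[Rplus/0]_(s < S) \big[Rplus/0]_(t < m)
      ((Favg f (X w s t) - Favg f (X w s t.+1)) + (3 / 2 * C + / (2 * L) * E w s t)))).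
    apply: sumR_le => s _; rewrite sumR_mull; apply: sumR_le => t _; exact: step.
  have tel1 : forall s : 'I_S, \big[Rplus/0]_(t < m) (Favg f (X w s t) - Favg f (X w s t.+1))
      = Favg f (Xt w s) - Favg f (Xt w s.+1).
    move=> s; exact: (telescopeR (fun t => Favg f (X w s t)) m).
  have tel2 : \big[Rplus/0]_(s < S) (Favg f (Xt w s) - Favg f (Xt w s.+1))
      = Favg f x0 - Favg f (Xt w S).
    exact: (telescopeR (fun s => Favg f (Xt w s)) S).
  have hXS : Om (Xt w S) by apply: (snapshot_in grad hconv hdiam hlmo hgam' hD).
  have hmS := hmin _ hXS.
  under eq_bigr => s _ do rewrite big_split /= tel1 big_split /= sumR_const card_ord -sumR_mull.
  rewrite big_split /= tel2 big_split /= sumR_const card_ord -sumR_mull.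
  rewrite hTe /Dl -Rmult_assoc; lra.
have herr : \big[Rplus/0]_(w : samples S m b n) \big[Rplus/0]_(s < S) \big[Rplus/0]_(t < m) E w s t
    <= T * (W * (L * L * (gam * gam * (D * D)))).
  rewrite exchange_big /=.
  under eq_bigr => s _ do rewrite exchange_big /=.
  apply: (Rle_trans _ (\big[Rplus/0]_(s < S) \big[Rplus/0]_(t < m) (W * (L * L * (gam * gam * (D * D)))))).
    apply: sumR_le => s _; apply: sumR_le => t _.
    apply: (Rle_trans _ (INR #|samples S m b n| * (L * L * ((INR t * gam * D) * (INR t * gam * D)) / INR b))).
      exact: (err_bound hconv hdiam hlmo hgam' hD hn Hs hx0 hb s t).
    rewrite -/W; apply: Rmult_le_compat_l; first lra.
    have ht : INR t * INR t <= INR m * INR m.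
      have h0 := pos_INR t; have : INR t <= INR m by apply: le_INR; apply/leP; exact: ltnW.
      nra.
    have hb' : INR b = INR m * INR m by rewrite /b -mulnn mult_INR.
    have hm' : 0 < INR m by apply: lt_0_INR; apply/ltP.
    rewrite hb'.
    apply: (Rmult_le_reg_r (INR m * INR m)); first nra.
    rewrite /Rdiv Rmult_assoc Rinv_l; last nra.
    have hLL : 0 <= L * L * (gam * gam * (D * D)) by apply: Rmult_le_pos; nra.
    have -> : L * L * (INR t * gam * D * (INR t * gam * D)) * 1
       = L * L * (gam * gam * (D * D)) * (INR t * INR t) by ring.
    apply: Rmult_le_compat_l => //.
  rewrite sumR_const card_ord sumR_const card_ord hTe; lra.
rewrite /expected_gap -/T -/W.
have -> : \big[Rplus/0]_(w : samples S m b n) (/ T *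
   \big[Rplus/0]_(s < S) \big[Rplus/0]_(t < m) FW_gap Om (gradF grad)
     (svfw_iter grad lmo (fun=> gam) m x0 (sample_path w) s t))
   = / T * \big[Rplus/0]_(w : samples S m b n) Gs w by rewrite sumR_mull.
have hsum : gam * \big[Rplus/0]_(w : samples S m b n) Gs w <= W * (Dl + 2 * T * C).
  rewrite sumR_mull.
  apply: (Rle_trans _ (\big[Rplus/0]_(w : samples S m b n) (Dl + T * (3 / 2 * C)
    + / (2 * L) * \big[Rplus/0]_(s < S) \big[Rplus/0]_(t < m) E w s t))).
    by apply: sumR_le => w _; exact: key w.
  rewrite big_split /= sumR_const -/W -sumR_mull.
  have hi : 0 < / (2 * L) by apply: Rinv_0_lt_compat; lra.
  have := Rmult_le_compat_l _ _ _ (Rlt_le _ _ hi) herr.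
  have -> : / (2 * L) * (T * (W * (L * L * (gam * gam * (D * D))))) = W * (T * C / 2).
    rewrite /C; field; lra.
  have gen : forall W Dl T C : R, W * (Dl + T * (3 / 2 * C)) + W * (T * C / 2) = W * (Dl + 2 * T * C)
    by move=> *; field.
  move=> h2; have h1 := gen W Dl T C.
  apply: (Rle_trans _ (W * (Dl + T * (3 / 2 * C)) + W * (T * C / 2))); last lra.
  apply: Rplus_le_compat_l; exact: h2.
have hg : 0 < gam by lra.
apply: (Rmult_le_reg_l (T * gam)); first nra.
have -> : T * gam * ((Dl + 2 * T * C) / (T * gam)) = Dl + 2 * T * C by field; lra.
have -> : T * gam * (/ W * (/ T * \big[Rplus/0]_(w : samples S m b n) Gs w))
   = / W * (gam * \big[Rplus/0]_(w : samples S m b n) Gs w) by field; lra.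
apply: (Rmult_le_reg_l W) => //.
rewrite -Rmult_assoc Rinv_r; last lra.
lra.
Qed.

Theorem theorem3 (d n : nat) (f : 'I_n -> vec d -> R) (grad : 'I_n -> vec d -> vec d)
  (Om : vec d -> Prop) (D L beta : R) (xstar x0 : vec d) (m T : nat)
  (lmo : vec d -> vec d) :
  (0 < n)%N ->
  nonempty_set Om -> convex_set Om -> compact_set Om -> has_diameter Om D ->
  (0 < D) -> (0 < L) ->
  (forall i, has_gradient (f i) (grad i)) ->
  (forall i, L_smooth Om (grad i) L) ->
  Om xstar -> (forall x, Om x -> Favg f xstar <= Favg f x) ->
  Om x0 ->
  (0 < beta) ->
  (beta >= 2 * (Favg f x0 - Favg f xstar) / (L * D ^ 2)) ->
  (1 <= m)%N -> (0 < T)%N -> (m %| T)%N ->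
  is_lmo Om lmo ->
  let gamma : R :=
    sqrt ((Favg f x0 - Favg f xstar) / (INR T * L * D ^ 2 * beta)) in
  (expected_gap Om grad lmo (fun _ => gamma) m (T %/ m)%N (m ^ 2)%N x0
   <= 2 * D / sqrt (INR T * beta) * sqrt (L * (Favg f x0 - Favg f xstar))
      * (1 + beta)).
Proof.
move=> hn hne hconv hcomp hdiam hD hL Hg Hs hxs hmin hx0 hbeta hbge hm hT hmT hlmo gamma.
have hmin0 := hmin x0 hx0.
have hTS : (m * (T %/ m))%N = T by rewrite mulnC divnK.
have hS : (0 < T %/ m)%N.
  by rewrite divn_gt0 // dvdn_leq.
have hT' : 0 < INR T by apply: lt_0_INR; apply/ltP.
have hT1 : 1 <= INR T by apply: (le_INR 1); apply/leP.
have hD2 : 0 < L * D ^ 2 by apply: Rmult_lt_0_compat => //; apply: pow_lt.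
have hb2 : 2 * (Favg f x0 - Favg f xstar) <= beta * (L * D ^ 2).
  have := Rmult_le_compat_r (L * D ^ 2) _ _ (Rlt_le _ _ hD2) (Rge_le _ _ hbge).
  rewrite /Rdiv Rmult_assoc Rinv_l; lra.
have hden : 0 < INR T * L * D ^ 2 * beta.
  have : 0 < INR T * (L * D ^ 2) * beta by apply: Rmult_lt_0_compat => //; apply: Rmult_lt_0_compat.
  by rewrite !Rmult_assoc.
set Dl := Favg f x0 - Favg f xstar in hmin0 hb2 gamma *.
have hDl : 0 <= Dl by rewrite /Dl; lra.
have hq : Dl / (INR T * L * D ^ 2 * beta) <= 1.
  apply: (Rmult_le_reg_r (INR T * L * D ^ 2 * beta)) => //.
  rewrite /Rdiv Rmult_assoc Rinv_l; last lra.
  have : beta * (L * D ^ 2) <= INR T * L * D ^ 2 * beta.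
    have -> : INR T * L * D ^ 2 * beta = INR T * (beta * (L * D ^ 2)) by ring.
    have : 0 < beta * (L * D ^ 2) by apply: Rmult_lt_0_compat.
    nra.
  lra.
have hq0 : 0 <= Dl / (INR T * L * D ^ 2 * beta).
  by apply: Rmult_le_pos => //; left; apply: Rinv_0_lt_compat.
have hg1 : gamma <= 1.
  rewrite /gamma -sqrt_1; exact: sqrt_le_1_alt.
have hgg : gamma * gamma = Dl / (INR T * L * D ^ 2 * beta) by rewrite /gamma sqrt_sqrt.
case: (Req_dec Dl 0) => [hD0|hD0].
-
  have g0 : gamma = 0 by rewrite /gamma hD0 /Rdiv Rmult_0_l sqrt_0.
  rewrite g0 hD0 Rmult_0_r sqrt_0 Rmult_0_r Rmult_0_l.
  rewrite /expected_gap.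
  have hW : 0 <= / INR #|samples (T %/ m) m (m ^ 2) n|.
    left; apply: Rinv_0_lt_compat; apply: lt_0_INR; apply/ltP.
    by rewrite card_ffun card_tuple card_ord !expn_gt0 hn.
  have hsum : \big[Rplus/0]_(w : samples (T %/ m) m (m ^ 2) n)
     (/ INR (m * (T %/ m)) *
      \big[Rplus/0]_(s < T %/ m) \big[Rplus/0]_(t < m)
         FW_gap Om (gradF grad) (svfw_iter grad lmo (fun=> 0) m x0 (sample_path w) s t)) <= 0.
    apply: sumR_nonpos => w _.
    have hi : 0 <= / INR (m * (T %/ m)) by rewrite hTS; left; apply: Rinv_0_lt_compat.
    have : \big[Rplus/0]_(s < T %/ m) \big[Rplus/0]_(t < m)
         FW_gap Om (gradF grad) (svfw_iter grad lmo (fun=> 0) m x0 (sample_path w) s t) <= 0.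
      apply: sumR_nonpos => s _; apply: sumR_nonpos => t _.
      rewrite /svfw_iter snapshot0 inner_iter0.
      apply: (gap_min hn hconv Hg Hs (Rlt_le _ _ hL) hlmo hx0).
      move=> y hy; have := hmin y hy; rewrite /Dl in hD0; lra.
    nra.
  nra.
-
  have hDp : 0 < Dl by lra.
  have hg : 0 < gamma by apply: sqrt_lt_R0; apply: Rdiv_lt_0_compat.
  have hmb := main_bound hn hconv hdiam (Rlt_le _ _ hD) hL Hg Hs hmin hx0 hm hS hlmo (conj hg hg1).
  apply: Rle_trans hmb _.
  rewrite hTS -/Dl.
  set Q := L * gamma * (D * D).
  have hQ : 0 <= Q by rewrite /Q; apply: Rmult_le_pos; nra.
  have hDl' : Dl = INR T * beta * gamma * Q.
    rewrite /Q; have -> : INR T * beta * gamma * (L * gamma * (D * D)) = (gamma * gamma) * (INR T * L * D ^ 2 * beta) by ring.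
    rewrite hgg; field; lra.
  have hL1 : (Dl + 2 * INR T * (L * (gamma * gamma) * (D * D))) / (INR T * gamma) = (beta + 2) * Q.
    rewrite hDl' /Q; field; lra.
  rewrite hL1.
  have hR : 2 * D / sqrt (INR T * beta) * sqrt (L * Dl) * (1 + beta) = 2 * (1 + beta) * Q.
    have hsa : 0 < sqrt (INR T * beta) by apply: sqrt_lt_R0; nra.
    have hsaa : sqrt (INR T * beta) * sqrt (INR T * beta) = INR T * beta by apply: sqrt_sqrt; nra.
    have hsb : 0 <= sqrt (L * Dl) := sqrt_pos _.
    have hsbb : sqrt (L * Dl) * sqrt (L * Dl) = L * Dl by apply: sqrt_sqrt; nra.
    have hQe : D / sqrt (INR T * beta) * sqrt (L * Dl) = Q.
      apply: Rsqr_inj.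
      - apply: Rmult_le_pos => //; apply: Rmult_le_pos; first lra.
        by left; apply: Rinv_0_lt_compat.
      - exact: hQ.
      rewrite /Rsqr.
      have -> : D / sqrt (INR T * beta) * sqrt (L * Dl) * (D / sqrt (INR T * beta) * sqrt (L * Dl))
         = D * D * (sqrt (L * Dl) * sqrt (L * Dl)) / (sqrt (INR T * beta) * sqrt (INR T * beta)) by field; lra.
      rewrite hsaa hsbb /Q.
      have -> : L * gamma * (D * D) * (L * gamma * (D * D)) = L * L * (D * D) * (D * D) * (gamma * gamma) by ring.
      rewrite hgg; field; nra.
    rewrite -hQe; field; lra.
  rewrite hR.
  nra.
Qed.
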